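(* Let $G$ be an irreducible complex reflection group acting on $V\cong\mathbb{C}^2$. If $z\in G$ is a nonidentity central element and $G$ contains no reflection of the same order as $z$, then $\ell(z)>\operatorname{codim}(z)$.
   Context: A reflection is an element of $GL(V)$ of finite order fixing a hyperplane pointwise; a complex reflection group is a finite subgroup of $GL(V)$ generated by reflections, irreducible if $V$ is an irreducible $G$-module. $\ell(g)$ is the minimal number of reflections in $G$ whose product is $g$ ($\ell(1)=0$), and $\operatorname{codim}(g)=2-\dim\{v\in V:gv=v\}$. *)

(* Defs.v *)
From mathcomp Require Import all_boot all_order all_algebra.
From mathcomp Require Import complex.
From mathcomp Require Import Rstruct.
Set Implicit Arguments. Unset Strict Implicit. Unset Printing Implicit Defensive.
Import GRing.Theory Num.Theory.
Local Open Scope ring_scope.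

Definition C : numClosedFieldType := Rdefinitions.R[i].

(* Elements of GL(V), V = C^2, are 2x2 matrices acting on column vectors
   v |-> g *m v.  A subspace of V is encoded (mxalgebra style) by the row
   space of a matrix U whose rows are the transposes of spanning vectors. *)
Notation mx2 := 'M[C]_2.

(* Fixed space {v : g v = v}, as the row space of transposed vectors:
   (g - 1) v = 0  <->  v^T (g - 1)^T = 0. *)
Definition fixspace (g : mx2) : 'M[C]_2 := kermx (g - 1%:M)^T.

Definition codim (g : mx2) : nat := (2 - \rank (fixspace g))%N.

Definition finite_order (g : mx2) : Prop := exists n : nat, (0 < n)%N /\ g ^+ n = 1.

Definition mx_order (g : mx2) (n : nat) : Prop :=
  [/\ (0 < n)%N, g ^+ n = 1 & forall m : nat, (0 < m)%N -> g ^+ m = 1 -> (n <= m)%N].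

Definition is_reflection (g : mx2) : Prop :=
  [/\ g \in unitmx, finite_order g & \rank (fixspace g) = 1%N].

Definition is_subgroup_GL (G : seq mx2) : Prop :=
  [/\ 1%:M \in G,
      (forall g, g \in G -> g \in unitmx),
      (forall g h, g \in G -> h \in G -> g *m h \in G) &
      (forall g, g \in G -> invmx g \in G)].

Definition refl_word (G : seq mx2) (g : mx2) (s : seq mx2) : Prop :=
  (forall r, r \in s -> r \in G /\ is_reflection r) /\
  g = foldr (fun a b => a *m b) 1%:M s.

(* G is generated by its reflections (G finite, so products suffice) *)
Definition generated_by_reflections (G : seq mx2) : Prop :=
  forall g, g \in G -> exists s, refl_word G g s.

Definition complex_reflection_group (G : seq mx2) : Prop :=
  is_subgroup_GL G /\ generated_by_reflections G.

Definition irreducible_action (G : seq mx2) : Prop :=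
  forall U : mx2, (forall g, g \in G -> (U *m g^T <= U)%MS) ->
    \rank U = 0%N \/ row_full U.

Definition refl_length (G : seq mx2) (g : mx2) (n : nat) : Prop :=
  (exists s, refl_word G g s /\ size s = n) /\
  (forall s, refl_word G g s -> (n <= size s)%N).

Definition central (G : seq mx2) (z : mx2) : Prop :=
  forall g, g \in G -> z *m g = g *m z.

(* Main.v *)
Require Import Defs.
From mathcomp Require Import all_boot all_order all_algebra.
From mathcomp Require Import complex.
From mathcomp Require Import Rstruct.
From Stdlib Require Import Classical.
Import GRing.Theory Num.Theory.
Local Open Scope ring_scope.

Lemma minP (P : nat -> Prop) : (exists n, P n) -> exists n, P n /\ forall m, P m -> (n <= m)%N.
Proof.
case=> n0 Pn0.
suff H : forall k n, (n <= k)%N -> P n -> exists n, P n /\ forall m, P m -> (n <= m)%N.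
  exact: (H n0 n0).
elim=> [|k IH] {}n lnk Pn.
  exists n; split=> // m _; by move: lnk; rewrite leqn0 => /eqP->.
case: (classic (exists m, (m < n)%N /\ P m)) => [[m [lmn Pm]]|nex].
  apply: (IH m) => //; by rewrite -ltnS (leq_trans lmn).
exists n; split=> // m Pm; rewrite leqNgt; apply/negP=> lmn; apply: nex; by exists m.
Qed.

Lemma order_exists (g : mx2) : finite_order g -> exists n, mx_order g n.
Proof.
case=> n [n0 gn].
have exP : exists n, (0 < n)%N && (g ^+ n == 1) by exists n; rewrite n0 gn eqxx.
case: (ex_minnP exP) => m /andP[m0 /eqP gm] mmin.
exists m; split=> // k k0 gk; apply: mmin; by rewrite k0 gk eqxx.
Qed.

Lemma schur (G : seq mx2) (z : mx2) :
  irreducible_action G -> central G z -> exists a, z = a%:M.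
Proof.
move=> irr cz.
have : size (char_poly z^T) != 1%N by rewrite size_char_poly.
case/closed_rootP => a.
rewrite -eigenvalue_root_char /eigenvalue /eigenspace => nz.
set U := kermx _ in nz.
have st : forall g, g \in G -> (U *m g^T <= U)%MS.
  move=> g gG; apply/sub_kermxP; rewrite -mulmxA.
  have -> : g^T *m (z^T - a%:M) = (z^T - a%:M) *m g^T.
    rewrite mulmxBl mulmxBr -!trmx_mul cz // scalar_mxC //.
  by rewrite mulmxA mulmx_ker mul0mx.
exists a.
case: (irr U st) => [/eqP | /row_fullP [B hB]].
  by rewrite mxrank_eq0 (negbTE nz).
have : z^T - a%:M = 0 by rewrite -[_ - _]mul1mx -hB -mulmxA mulmx_ker mulmx0.
move/eqP; rewrite subr_eq0 => /eqP h.
by rewrite -[z]trmxK h tr_scalar_mx.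
Qed.

Lemma trX (r : mx2) m : (r ^+ m)^T = r^T ^+ m.
Proof.
elim: m => [|m IH]; first by rewrite !expr0 trmx1.
by rewrite exprS exprSr -IH -!mulmxE -trmx_mul.
Qed.

Lemma trB (A B : mx2) : (A - B)^T = A^T - B^T.
Proof. by apply/matrixP => i j; rewrite !mxE. Qed.

Lemma fix_eig (r : mx2) (a : C) : (kermx (r - a%:M)^T != 0) -> root (char_poly r^T) a.
Proof.
move=> h; rewrite -eigenvalue_root_char /eigenvalue /eigenspace.
by rewrite trB tr_scalar_mx in h.
Qed.

Lemma rank1_nz (r : mx2) : \rank (fixspace r) = 1%N -> kermx (r - 1%:M)^T != 0.
Proof. by move=> h; rewrite -mxrank_eq0 -/(fixspace r) h. Qed.

Lemma refl2 (r1 r2 : mx2) (a : C) : is_reflection r1 -> is_reflection r2 ->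
  r1 *m r2 = a%:M -> a != 1 -> forall m, (r1 ^+ m == 1) = (a ^+ m == 1).
Proof.
case=> _ _ f1; case=> _ _ f2 e an1 m.
set M := r1^T.
have e1 : root (char_poly M) 1 by apply: fix_eig; exact: (@rank1_nz r1 f1).
have ea' : kermx (r1 - a%:M)^T != 0.
  apply/negP => /eqP h0; move/negP: (@rank1_nz r2 f2); apply.
  set K := kermx (r2 - 1%:M)^T in h0 *.
  have K0 : K *m r2^T = K.
    apply/eqP; rewrite -subr_eq0.
    have := mulmx_ker (r2 - 1%:M)^T; rewrite -/K trB trmx1 mulmxBr mulmx1.
    by move=> ->.
  rewrite -submx0 -h0; apply/sub_kermxP.
  rewrite trB tr_scalar_mx mulmxBr mul_mx_scalar.
  rewrite -{1}K0 -mulmxA -trmx_mul e tr_scalar_mx mul_mx_scalar.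
  by rewrite subrr.
have ea : root (char_poly M) a by apply: fix_eig.
have : eigenvalue M a by rewrite eigenvalue_root_char.
case/eigenvalueP => v vM vn0.
have vMm : forall k, v *m M ^+ k = a ^+ k *: v.
  elim=> [|k IH]; first by rewrite !expr0 mulmx1 scale1r.
  by rewrite exprSr mulmxA IH -scalemxAl vM scalerA exprSr.
have -> : (r1 ^+ m == 1) = (M ^+ m == 1).
  by rewrite -trX; apply/eqP/eqP => [->|h]; [rewrite trmx1 | apply: trmx_inj; rewrite h trmx1].
apply/eqP/eqP => [h|h].
  move: (vMm m); rewrite h mulmx1 => /eqP; rewrite -subr_eq0 -{1}[v]scale1r -scalerBl.
  rewrite scalemx_eq0 (negbTE vn0) orbF subr_eq0 => /eqP <-. by [].
set p := \prod_(x <- [:: 1; a]) ('X - x%:P).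
have up : uniq_roots [:: 1; a] by rewrite uniq_rootsE /= inE eq_sym an1.
have [q1 hq1] : exists q, char_poly M = q * p.
  by apply: uniq_roots_prod_XsubC => //=; rewrite e1 ea.
have pc : p %= char_poly M.
  rewrite -dvdp_size_eqp; last by rewrite hq1 dvdp_mull.
  by rewrite size_prod_XsubC size_char_poly.
have [q2 hq2] : exists q, 'X^m - 1 = q * p.
  apply: uniq_roots_prod_XsubC => //=.
  by rewrite !rootE !hornerE h expr1n subrr eqxx.
have : char_poly M %| 'X^m - 1 by rewrite -(eqp_dvdl _ pc) hq2 dvdp_mull.
case/dvdpP => q3 hq3.
have := congr1 (horner_mx M) hq3.
rewrite rmorphM /= Cayley_Hamilton mulr0 rmorphB rmorphXn /= horner_mx_X rmorph1.
by move/eqP; rewrite subr_eq0 => /eqP.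
Qed.

Lemma scalX (a : C) m : (a%:M : mx2) ^+ m = (a ^+ m)%:M.
Proof.
elim: m => [|m IH]; first by rewrite !expr0.
by rewrite exprS IH exprS -mulmxE mul_scalar_mx scale_scalar_mx.
Qed.

Lemma scal1 (b : C) : ((b%:M : mx2) == 1) = (b == 1).
Proof.
apply/eqP/eqP => [h|->]; last by [].
have := congr1 (fun A : mx2 => A 0 0) h; by rewrite /= !mxE.
Qed.

Theorem mainTheorem9 (G : seq mx2) (z : mx2) :
  complex_reflection_group G ->
  irreducible_action G ->
  z \in G -> central G z -> z != 1%:M ->
  ~ (exists r n, [/\ r \in G, is_reflection r, mx_order r n & mx_order z n]) ->
  exists n, refl_length G z n /\ (codim z < n)%N.
Proof.
move=> [_ gen] irr zG cz zn1 nex.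
have [s0 w0] := gen z zG.
have [n [[s [ws ss]] nmin]] :=
  minP (fun n => exists s, refl_word G z s /\ size s = n) (ex_intro _ _ (ex_intro _ s0 (conj w0 erefl))).
exists n; split.
  split; first by exists s.
  move=> s' w'; apply: nmin; by exists s'.
apply: (@leq_ltn_trans 2); first exact: leq_subr.
rewrite -ss.
case: ws; case: s {ss} => [|r1 [|r2 [|r3 t]]] // hs /= ez.
- by rewrite ez eqxx in zn1.
- have [r1G r1r] := hs r1 (mem_head _ _).
  rewrite mulmx1 in ez; subst z.
  have [k ok] := @order_exists r1 (let: And3 _ f _ := r1r in f).
  by exfalso; apply: nex; exists r1, k; split.
- have [r1G r1r] := hs r1 (mem_head _ _).
  have [r2G r2r] : r2 \in G /\ is_reflection r2 by apply: hs; rewrite !inE eqxx orbT.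
  have [a za] := @schur G z irr cz.
  have an1 : a != 1 by apply: contra zn1 => /eqP a1; by rewrite za a1.
  rewrite mulmx1 za in ez.
  have eq := @refl2 r1 r2 a r1r r2r (esym ez) an1.
  have [k ok] := @order_exists r1 (let: And3 _ f _ := r1r in f).
  exfalso; apply: nex; exists r1, k; split => //.
  case: ok => k0 /eqP rk kmin; split => //.
    by apply/eqP; rewrite za scalX scal1 -eq.
  move=> m m0 /eqP zm; apply: kmin => //; apply/eqP.
  by rewrite eq -scal1 -scalX -za.
Qed.
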